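(* Let $G=(\Gamma,s)$ be a connected rooted graph and $p\in\mathrm{PF}(G)$. Define $V_M(p)=\{v\in\tilde V: p(v)\le\mathrm{mult}(vs)\}$ and, for $v\in\tilde V$, $p^{v+}=p+\sum_{w\in\tilde V\setminus\{v\}}\mathrm{mult}(ws)\mathbf 1_w$. Then $p$ is prime if and only if $p^{v+}\in\mathrm{PF}(G)$ for every $v\in V_M(p)$.
   Context: $\mathbb{N}=\{1,2,\dots\}$. A rooted graph $G=(\Gamma,s)$ is a finite undirected multigraph without loops with a distinguished vertex $s$ (the sink); $V$ is its vertex set, $\tilde V=V\setminus\{s\}$. $\mathrm{mult}(vw)$ is the number of edges between $v,w$; $\deg^A(v)=\sum_{w\in A}\mathrm{mult}(vw)$ for $A\subseteq V$. $\mathbf 1_w$ is the indicator function of $w$. A $G$-parking function is $p:\tilde V\to\mathbb{N}$ such that for every nonempty $S\subseteq\tilde V$ there is $v\in S$ with $p(v)\le\deg^{V\setminus S}(v)$; $\mathrm{PF}(G)$ is their set (the same definition is used for possibly disconnected rooted graphs). For $A\subseteq\tilde V$, $G^A$ is the induced subgraph on $A\cup\{s\}$ rooted at $s$. For an ordered pair $(A,B)$ of nonempty disjoint sets with $A\cup B=\tilde V$ and $p\in\mathrm{PF}(G)$, $p^A(v)=p(v)$ ($v\in A$) and $p^B(v)=p(v)-\deg^A(v)$ ($v\in B$); $p$ is decomposable w.r.t. $(A,B)$ if $p^A\in\mathrm{PF}(G^A)$ and $p^B\in\mathrm{PF}(G^B)$; $p$ is prime if it is decomposable w.r.t. no such $(A,B)$.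 *)

(* Defs.v *)
From mathcomp Require Import all_boot all_order all_algebra.
Set Implicit Arguments. Unset Strict Implicit. Unset Printing Implicit Defensive.
Import Order.TTheory GRing.Theory Num.Theory.

(* A rooted multigraph is given by a finite vertex type V, a symmetric loopless
   multiplicity function mult : V -> V -> nat and a sink s : V.
   Functions on the non-sink vertices are modelled as total functions V -> int
   whose value at s (or outside the relevant vertex set) is ignored. *)

Section Defs.
Variables (V : finType) (mult : V -> V -> nat) (s : V).

Definition deg (A : {set V}) (v : V) : nat := \sum_(w in A) mult v w.

Definition connected_graph : Prop :=
  forall x y : V, connect (fun a b => 0 < mult a b)%N x y.

(* q restricted to A is a parking function of the induced rooted graph G^A
   (vertex set A ∪ {s}, sink s). *)
Definition PF_on (A : {set V}) (q : V -> int) : Prop :=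
  (forall v, v \in A -> (0 < q v)%R) /\
  (forall S : {set V}, S \subset A -> S != set0 ->
     exists2 v, v \in S & (q v <= (deg ((s |: A) :\: S) v)%:Z)%R).

Definition PF (q : V -> int) : Prop := PF_on [set~ s] q.

Definition decomposable (q : V -> int) (A B : {set V}) : Prop :=
  PF_on A q /\ PF_on B (fun v => q v - (deg A v)%:Z)%R.

Definition admissible_pair (A B : {set V}) : Prop :=
  A != set0 /\ B != set0 /\ [disjoint A & B] /\ A :|: B = [set~ s].

Definition prime_pf (q : V -> int) : Prop :=
  PF q /\ forall A B, admissible_pair A B -> ~ decomposable q A B.

Definition VM (q : V -> int) : {set V} :=
  [set v in [set~ s] | (q v <= (mult v s)%:Z)%R].

Definition pplus (q : V -> int) (v : V) : V -> int :=
  fun w => if (w != v) && (w != s) then (q w + (mult w s)%:Z)%R else q w.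

End Defs.

(* Main.v *)
Require Import Defs.
From mathcomp Require Import all_boot all_order all_algebra.
From mathcomp Require Import zify.
From Stdlib Require Import Classical.
Import Order.TTheory GRing.Theory Num.Theory.

Section Helpers.
Variables (V : finType) (mult : V -> V -> nat).

Lemma deg_U (A B : {set V}) v : [disjoint A & B] ->
  deg mult (A :|: B) v = (deg mult A v + deg mult B v)%N.
Proof.
move=> dAB; rewrite /deg -bigU //; apply: eq_bigl => x; by rewrite !inE.
Qed.

Lemma disjP (A B : {set V}) :
  reflect (forall x, x \in A -> x \in B -> False) [disjoint A & B].
Proof.
rewrite disjoint_subset; apply: (iffP subsetP) => H x.
  by move=> xA xB; have := H x xA; rewrite inE xB.
by move=> xA; rewrite inE; apply/negP => xB; exact: H x xA xB.
Qed.

Lemma setDUK' {A B : {set V}} : A \subset B -> A :|: B :\: A = B.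
Proof.
move=> sAB; apply/setP => x; rewrite !inE.
by case xA: (x \in A) => //=; rewrite (subsetP sAB x xA).
Qed.

Lemma deg_sub (A B : {set V}) v : A \subset B -> (deg mult A v <= deg mult B v)%N.
Proof.
move=> sAB; rewrite -(setDUK' sAB) deg_U ?leq_addr //.
by apply/disjP => x; rewrite !inE => xA /andP[nA _]; rewrite xA in nA.
Qed.

Lemma deg_set1 (s v : V) : deg mult [set s] v = mult v s.
Proof. by rewrite /deg big_set1. Qed.
End Helpers.

Theorem corollary2p12 (V : finType) (mult : V -> V -> nat) (s : V) (p : V -> int)
  (Hsym : forall v w, mult v w = mult w v)
  (Hloop : forall v, mult v v = 0%N)
  (Hconn : connected_graph mult)
  (Hp : PF mult s p) :
  prime_pf mult s p <-> (forall v, v \in VM mult s p -> PF mult s (pplus mult s p v)).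
Proof.
have sT : s |: [set~ s] = setT by apply/setP => x; rewrite !inE; case: eqP.
split.
- move=> [_ Hpr] v; rewrite inE => /andP[vs hv].
  split.
    move=> w ws; have := Hp.1 w ws; rewrite /pplus; case: ifP => _; lia.
  move=> S sS S0; apply: NNPP => Hn.
  have sSs : s \notin S by apply/negP => /(subsetP sS); rewrite !inE eqxx.
  have eS : (s |: [set~ s]) :\: S = [set s] :|: ([set~ s] :\: S).
    by rewrite sT; apply/setP => x; rewrite !inE; case: eqP => // ->; rewrite (negPf sSs).
  have dS : [disjoint [set s] & [set~ s] :\: S].
    by apply/disjP => x; rewrite !inE => /eqP -> /andP[]; rewrite eqxx.
  have vS : v \notin S.
    apply/negP => vS; apply: Hn; exists v => //.
    rewrite eS deg_U // deg_set1 /pplus eqxx /=; lia.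
  pose F := [pred X : {set V} | [&& X \subset [set~ s], v \notin X &
      [forall u in X, ((deg mult ([set~ s] :\: X) u)%:Z < p u)%R]]].
  have SF : F S.
    rewrite /F /= sS vS /=; apply/forall_inP => u uS.
    have : ~ (pplus mult s p v u <= (deg mult ((s |: [set~ s]) :\: S) u)%:Z)%R
      by move=> h; apply: Hn; exists u.
    have uv : u != v by apply: contraNneq vS => <-.
    have us : u != s by apply: contraNneq sSs => <-.
    rewrite eS deg_U // deg_set1 /pplus uv us /=; lia.
  case: (arg_maxnP (fun X : {set V} => #|X|) SF) => Sm SmF Smax.
  move: SmF => /and3P[sSm vSm /forall_inP badSm].
  have sSms : s \notin Sm by apply/negP => /(subsetP sSm); rewrite !inE eqxx.
  set A := [set~ s] :\: Sm.
  have sA : A \subset [set~ s] by apply: subsetDl.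
  apply: (Hpr A Sm).
    split; first by apply/set0Pn; exists v; rewrite !inE in vs *; rewrite vSm vs.
    split; first by rewrite -card_gt0; apply: leq_trans (Smax _ SF); rewrite card_gt0.
    split; first by apply/disjP => x; rewrite !inE => /andP[/negP].
    by rewrite setUC setDUK'.
  split.
  + split; first by move=> u /(subsetP sA) /(Hp.1).
    move=> T sTA T0.
    have sTs : s \notin T by apply/negP => /(subsetP sTA) /(subsetP sA); rewrite !inE eqxx.
    case: (boolP (v \in T)) => vT.
      exists v => //; apply: le_trans hv _; rewrite lez_nat.
      rewrite -(@deg_set1 V mult s v); apply: deg_sub; apply/subsetP => x.
      by rewrite !inE => /eqP ->; rewrite eqxx (negPf sTs).
    apply: NNPP => Hn2.
    have FU : F (Sm :|: T).
      rewrite /F /= subUset sSm (subset_trans sTA sA) /= inE negb_or vSm vT /=.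
      apply/forall_inP => u; rewrite inE => /orP[uS|uT].
        apply: le_lt_trans (badSm u uS); rewrite lez_nat; apply: deg_sub.
        by apply/subsetP => x; rewrite !inE; case: (x == s); case: (x \in Sm); case: (x \in T).
      have : ~ (p u <= (deg mult ((s |: A) :\: T) u)%:Z)%R
        by move=> h; apply: Hn2; exists u.
      have : (deg mult ([set~ s] :\: (Sm :|: T)) u <= deg mult ((s |: A) :\: T) u)%N.
        apply: deg_sub; apply/subsetP => x; rewrite /A !inE.
        by case: (x == s); case: (x \in Sm); case: (x \in T).
      move=> hle hn.
      apply: (le_lt_trans (y := ((deg mult ((s |: A) :\: T) u)%:Z)%R)); first by rewrite lez_nat.
      by rewrite ltNge; apply/negP.
    have := Smax _ FU => hc.
    have : Sm == Sm :|: T by rewrite eqEcard subsetUl /=; exact: hc.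
    move/eqP => e.
    have /subsetP sTSm : T \subset Sm by apply: subset_trans (subsetUr Sm T) _; rewrite -e.
    case/set0Pn: T0 => t tT.
    by have := subsetP sTA t tT; rewrite /A !inE (sTSm t tT).
  + split.
      by move=> u uS; rewrite subr_gt0; exact: badSm.
    move=> T sTSm T0.
    have sTs : T \subset [set~ s] by apply: subset_trans sTSm sSm.
    have [u uT hu] := Hp.2 T sTs T0.
    exists u => //.
    have eT : (s |: [set~ s]) :\: T = A :|: ((s |: Sm) :\: T).
      rewrite sT; apply/setP => x; rewrite /A !inE.
      move: (subsetP sTSm x).
      case: (x == s); case: (x \in Sm); case: (x \in T) => //=; by move=> /(_ isT).
    have dT : [disjoint A & (s |: Sm) :\: T].
      apply/disjP => x; rewrite /A !inE => /andP[/negPf xs /negPf xS].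
      by rewrite xs xS andbF.
    move: hu; rewrite eT deg_U // => hu; clear -hu; lia.
- move=> H; split; first exact: Hp.
  move=> A B [A0 [B0 [dAB UAB]]] [[posA PFA] [posB PFB]].
  have sA : A \subset [set~ s] by rewrite -UAB subsetUl.
  have sB : B \subset [set~ s] by rewrite -UAB subsetUr.
  have sAs : s \notin A by apply/negP => /(subsetP sA); rewrite !inE eqxx.
  have sBs : s \notin B by apply/negP => /(subsetP sB); rewrite !inE eqxx.
  have [v vA hv] := PFA A (subxx A) A0.
  have e1 : (s |: A) :\: A = [set s].
    apply/setP => x; rewrite !inE; case: eqP => [->|] //=; first by rewrite sAs.
    by rewrite andNb.
  rewrite e1 deg_set1 in hv.
  have vVM : v \in VM mult s p by rewrite inE (subsetP sA) //= hv.
  have [u uB hu] := (H v vVM).2 B sB B0.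
  have hd : forall y, y \in A -> y \in B -> False by apply/disjP.
  have eB : (s |: [set~ s]) :\: B = [set s] :|: A.
    rewrite sT; apply/setP => x; rewrite !inE.
    have hx : ((x \in A) || (x \in B)) = (x != s) by rewrite -in_setU UAB !inE.
    have := hd x.
    case: (x =P s) => [->|/eqP xs]; first by rewrite (negPf sBs).
    rewrite (negPf xs) in hx *; move: (hd x) hx.
    by case: (x \in A); case: (x \in B) => //= h1 h2; exfalso; exact: h1.
  have dsA : [disjoint [set s] & A].
    by apply/disjP => x; rewrite !inE => /eqP ->; rewrite (negPf sAs).
  have uv : u != v by apply: contraTneq uB => ->; apply/negP => vB; exact: hd v vA vB.
  have us : u != s by apply: contraNneq sBs => <-.
  move: hu; rewrite eB deg_U // deg_set1 /pplus uv us /=.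
  have := posB u uB; lia.
Qed.
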